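(* Assume (A3). Then, almost surely in $X_1,\dots,X_n$, for every $\delta>0$, $$\mathbb E_\varepsilon\Big[\sup_{f\in\mathcal F_b,\ \mathbb E_n[\xi_f^2(X)]\le\delta}\frac1n\sum_{i=1}^n\varepsilon_i\xi_f(X_i)\Big]\le\sqrt{10}\,(\|f_{\mathcal H}\|_K\vee1)\,\widehat R_x(\delta).$$
   Context: $\mathcal Z\subseteq\mathbb R^r$, $\mathcal X\subseteq\mathbb R^p$; $Z$ random in $\mathcal Z$ with law $\rho$, $\mathcal L^2(\rho)$ with $\langle\cdot,\cdot\rangle_\rho$; $K$ a kernel on $\mathcal Z$ with RKHS $\mathcal H_K$ and norm $\|\cdot\|_K$; $f_{\mathcal H}\in\mathcal H_K$ fixed. (A3) $L_Kf=\int K(z,\cdot)f(z)d\rho(z)=\sum_j\mu_j\langle\phi_j,f\rangle_\rho\phi_j$ with nonincreasing $\mu_j\ge0$, $\mu_1>0$, $\{\phi_j\}$ orthonormal basis of $\mathcal L^2(\rho)$. $\widehat g:\mathcal X\to\mathcal Z$ fixed measurable; $X_1,\dots,X_n$ points of $\mathcal X$; $\mathbb E_n[F(X)]=\frac1n\sum_iF(X_i)$. $\mathcal F_b=\{f\in\mathcal H_K:\|f-f_{\mathcal H}\|_K\le3\|f_{\mathcal H}\|_K\}$; $\xi_f(x)=f(\widehat g(x))-f_{\mathcal H}(\widehat g(x))$. $\varepsilon_1,\dots,\varepsilon_n$ are i.i.d. Rademacher signs and $\mathbb E_\varepsilon$ is expectation over them only. $\mathbf K_x$ is the $n\times n$ matrix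 with entries $n^{-1}K(\widehat g(X_i),\widehat g(X_j))$, eigenvalues $\widehat\mu_{x,1}\ge\dots\ge\widehat\mu_{x,n}$, and $\widehat R_x(\delta)=(\frac1n\sum_{j=1}^n\min\{\delta,\widehat\mu_{x,j}\})^{1/2}$. *)

(* Defs.v *)
From HB Require Import structures.
From mathcomp Require Import all_boot all_order all_algebra.
From mathcomp Require Import all_classical all_reals all_analysis.
Set Implicit Arguments. Unset Strict Implicit. Unset Printing Implicit Defensive.
Import Order.TTheory GRing.Theory Num.Theory.
Local Open Scope classical_set_scope.
Local Open Scope ring_scope.

Section Defs.
Variable R : realType.

Definition is_RKHS (Z : Type) (K : Z -> Z -> R) (HK : set (Z -> R))
    (ip : (Z -> R) -> (Z -> R) -> R) : Prop :=
  ((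
      HK (fun _ => 0)) /\
      ((forall f g, HK f -> HK g -> HK (fun z => f z + g z))) /\
      ((forall (a : R) f, HK f -> HK (fun z => a * f z))) /\
      (
      (forall f g, HK f -> HK g -> ip f g = ip g f)) /\
      ((forall f g h, HK f -> HK g -> HK h ->
          ip (fun z => f z + g z) h = ip f h + ip g h)) /\
      ((forall (a : R) f g, HK f -> HK g -> ip (fun z => a * f z) g = a * ip f g)) /\
      ((forall f, HK f -> 0 <= ip f f)) /\
      ((forall f, HK f -> ip f f = 0 -> f = (fun _ => 0))) /\
      (
      (forall u : nat -> (Z -> R), (forall k, HK (u k)) ->
         (forall e : R, 0 < e -> exists N, forall k m, (N <= k)%N -> (N <= m)%N ->
            Num.sqrt (ip (fun z => u k z - u m z) (fun z => u k z - u m z)) < e) ->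
         exists l, HK l /\
           (forall e : R, 0 < e -> exists N, forall k, (N <= k)%N ->
            Num.sqrt (ip (fun z => u k z - l z) (fun z => u k z - l z)) < e))) /\
      (
      (forall z, HK (K z))) /\
      (
      (forall f z, HK f -> ip f (K z) = f z))).

Definition normK (Z : Type) (ip : (Z -> R) -> (Z -> R) -> R) (f : Z -> R) : R :=
  Num.sqrt (ip f f).

Definition ip_rho d (Z : measurableType d) (rho : probability Z R)
    (f g : Z -> R) : R :=
  fine (\int[rho]_z (f z * g z)%:E)%E.

Definition L2 d (Z : measurableType d) (rho : probability Z R) (f : Z -> R) : Prop :=
  measurable_fun setT f /\ rho.-integrable setT (fun z => (f z ^+ 2)%:E).

Definition LK d (Z : measurableType d) (rho : probability Z R)
    (K : Z -> Z -> R) (f : Z -> R) : Z -> R :=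
  fun z' => fine (\int[rho]_z (K z z' * f z)%:E)%E.

Definition assumption_A3 d (Z : measurableType d) (rho : probability Z R)
    (K : Z -> Z -> R) (mu : nat -> R) (phi : nat -> Z -> R) : Prop :=
  (((forall j, 0 <= mu j)) /\
      ((forall j k, (j <= k)%N -> mu k <= mu j)) /\
      (0 < mu 0%N) /\
      (
      (forall j, L2 rho (phi j))) /\
      ((forall j k, ip_rho rho (phi j) (phi k) = (j == k)%:R)) /\
      (
      (forall f, L2 rho f -> (forall j, ip_rho rho (phi j) f = 0) ->
          ip_rho rho f f = 0)) /\
      (
      (forall f, L2 rho f ->
         L2 rho (LK rho K f) /\
         (fun N : nat =>
            let r := fun z => LK rho K f z -
                      \sum_(j < N) mu j * ip_rho rho (phi j) f * phi j z in
            ip_rho rho r r) @ \oo --> 0))).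

Definition En (X : Type) (n : nat) (Xs : 'I_n -> X) (F : X -> R) : R :=
  n%:R^-1 * \sum_(i < n) F (Xs i).

Definition sgn (b : bool) : R := if b then 1 else -1.

Definition local_rademacher (Z X : Type) (HK : set (Z -> R))
    (ip : (Z -> R) -> (Z -> R) -> R) (fH : Z -> R) (ghat : X -> Z)
    (n : nat) (Xs : 'I_n -> X) (delta : R) : \bar R :=
  let xi := fun f x => f (ghat x) - fH (ghat x) in
  let Fb := [set f | HK f /\
               normK ip (fun z => f z - fH z) <= 3 * normK ip fH] in
  let val := fun (s : {ffun 'I_n -> bool}) (f : Z -> R) =>
        n%:R^-1 * \sum_(i < n) sgn (s i) * xi f (Xs i) in
  let loc := [set f | Fb f /\ En Xs (fun x => xi f x ^+ 2) <= delta] in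
  ((2%:R ^- n)%:E *
   \sum_(s : {ffun 'I_n -> bool})
     ereal_sup [set (val s f)%:E | f in loc])%E.

Definition Kmat (Z X : Type) (K : Z -> Z -> R) (ghat : X -> Z)
    (n : nat) (Xs : 'I_n -> X) : 'M[R]_n :=
  \matrix_(i, j) (n%:R^-1 * K (ghat (Xs i)) (ghat (Xs j))).

Definition Rhat (n : nat) (muhat : 'I_n -> R) (delta : R) : R :=
  Num.sqrt (n%:R^-1 * \sum_(j < n) Num.min delta (muhat j)).

End Defs.

(* Main.v *)
Set Warnings "-all".
Require Import Defs.
From HB Require Import structures.
From mathcomp Require Import all_boot all_order all_algebra.
From mathcomp Require Import all_classical all_reals all_analysis.
From mathcomp Require Import complex sesquilinear spectral.
From mathcomp Require Import ring lra.
Import Order.TTheory GRing.Theory Num.Theory.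
Local Open Scope classical_set_scope.
Local Open Scope ring_scope.
Lemma charpoly_sim (F : fieldType) n (P D : 'M[F]_n) : P \in unitmx ->
  char_poly (invmx P *m D *m P) = char_poly D.
Proof.
move=> Pu.
rewrite /char_poly /char_poly_mx.
set Pp := map_mx polyC P. set Pi := map_mx polyC (invmx P).
have PiP : Pi *m Pp = 1%:M by rewrite -map_mxM mulVmx // map_mx1.
have -> : 'X%:M - map_mx polyC (invmx P *m D *m P) = Pi *m ('X%:M - map_mx polyC D) *m Pp.
  rewrite !map_mxM mulmxBr mulmxBl -!mulmxA; congr (_ - _).
  by rewrite mul_scalar_mx -scalemxAr PiP scalemx1.
by rewrite !det_mulmx mulrAC -det_mulmx PiP det1 mul1r.
Qed.

Lemma invmx_uniq (F : fieldType) n (A B : 'M[F]_n) : A *m B = 1%:M -> invmx A = B.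
Proof.
move=> AB; have [Au _] := mulmx1_unit AB.
by rewrite -(mulKmx Au B) AB mulmx1.
Qed.

Lemma trace_inv (R : realType) n (A : 'M[R]_n) (mu : 'I_n -> R) (de ga : R) :
  A^T = A -> char_poly A = \prod_(j < n) ('X - (mu j)%:P) ->
  (forall j, 0 <= mu j) -> 0 < de -> 0 <= ga ->
  (de%:M + ga *: A) \in unitmx /\
  \tr (invmx (de%:M + ga *: A)) = \sum_(j < n) (de + ga * mu j)^-1.
Proof.
move=> At hchar mu0 de0 ga0.
pose toC := real_complex R.
pose Ac := map_mx toC A.
have Anorm : Ac \is normalmx.
  apply: symmetric_normalmx.
    apply/is_hermitianmxP; rewrite expr0 scale1r map_mx_id //.
    by rewrite /Ac map_trmx At.
  by apply/mxOverP => i j; rewrite mxE; apply/complex_realP; exists (A i j).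
move/orthomx_spectralP: (Anorm) => AcE.
set P := spectralmx Ac in AcE; set d := spectral_diag Ac in AcE.
have Pu : P \in unitmx by apply: spectral_unit.
pose s := [seq d 0 j | j <- index_enum 'I_n].
pose t := [seq toC (mu j) | j <- index_enum 'I_n].
have hperm : perm_eq s t.
  apply: prod_XsubC_eq; rewrite !big_map.
  have -> : \prod_(j <- index_enum 'I_n) ('X - (d 0 j)%:P) = char_poly Ac.
    rewrite AcE charpoly_sim // char_poly_trig ?diag_mx_is_trig //.
    by apply: eq_bigr => j _; rewrite mxE eqxx mulr1n.
  by rewrite /Ac -map_char_poly hchar map_prod_XsubC.
pose w := \row_j (de%:C + ga%:C * d 0 j)%C.
have w0 : forall j, w 0 j != 0.
  move=> j; rewrite mxE.
  have : d 0 j \in t by rewrite -(perm_mem hperm); apply: map_f; rewrite mem_index_enum.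
  case/mapP => k _ ->.
  rewrite -[ga%:C%C]/(toC ga) -[de%:C%C]/(toC de) -rmorphM -rmorphD fmorph_eq0.
  by rewrite gt_eqF // ltr_pwDl // mulr_ge0.
pose wi := \row_j (w 0 j)^-1.
have wwi : diag_mx w *m diag_mx wi = 1%:M.
  apply/matrixP => i j; rewrite mul_diag_mx !mxE.
  case: (eqVneq i j) => [->|nij]; last by rewrite mulr0n mulr0.
  by rewrite mulr1n mulfV //; have := w0 j; rewrite mxE.
have Du : diag_mx w \in unitmx by case: (mulmx1_unit wwi).
have BcE : map_mx toC (de%:M + ga *: A) = invmx P *m diag_mx w *m P.
  rewrite map_mxD map_scalar_mx map_mxZ -/Ac AcE.
  have -> : diag_mx w = (toC de)%:M + toC ga *: diag_mx d.
    apply/matrixP => i j; rewrite !mxE.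
    by case: (eqVneq i j) => [->|nij]; rewrite ?eqxx ?mulr1n ?mulr0n ?mulr0 ?addr0 ?mxE.
  rewrite mulmxDr mulmxDl -scalemxAr -scalemxAl; congr (_ + _).
  by rewrite mul_mx_scalar -scalemxAl mulVmx // scalemx1.
have Bcu : map_mx toC (de%:M + ga *: A) \in unitmx.
  by rewrite BcE !unitmx_mul unitmx_inv Pu Du.
split; first by rewrite -(map_unitmx toC).
apply: (@complexI R).
rewrite -trace_map_mx map_invmx BcE.
have -> : invmx (invmx P *m diag_mx w *m P) = invmx P *m diag_mx wi *m P.
  apply: invmx_uniq.
  rewrite -!mulmxA [X in _ *m (_ *m X)]mulmxA mulmxV // mul1mx.
  by rewrite [X in _ *m X]mulmxA wwi mul1mx mulVmx.
rewrite -mulmxA mxtrace_mulC -mulmxA mulmxV // mulmx1 mxtrace_diag.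
rewrite rmorph_sum.
transitivity (\sum_(x <- s) (de%:C + ga%:C * x)^-1)%C.
  by rewrite big_map; apply: eq_bigr => j _; rewrite !mxE.
rewrite (perm_big _ hperm) big_map; apply: eq_bigr => j _.
by rewrite fmorphV rmorphD rmorphM.
Qed.

Lemma quad_disc (R : realFieldType) (a b c : R) : 0 <= c ->
  (forall t, 0 <= a + 2 * b * t + c * t ^+ 2) -> b ^+ 2 <= a * c.
Proof.
move=> c0 H.
have a0 : 0 <= a by have := H 0; rewrite !mulr0 expr0n /= mulr0 !addr0.
case: (eqVneq c 0) => [c0'|cn0].
  case: (eqVneq b 0) => [->|bn0]; first by rewrite expr0n /= mulr_ge0.
  have := H (- (a + 1) / (2 * b)); rewrite c0' mul0r addr0.
  have -> : 2 * b * (- (a + 1) / (2 * b)) = - (a + 1) by field.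
  by move=> h; exfalso; move: h; rewrite opprD addrA subrr sub0r oppr_ge0 ler10.
have cp : 0 < c by rewrite lt_def cn0 c0.
have := H (- b / c).
have -> : a + 2 * b * (- b / c) + c * (- b / c) ^+ 2 = a - b ^+ 2 / c by field.
by rewrite subr_ge0 ler_pdivrMr // mulrC.
Qed.

Lemma cs_sum (R : realFieldType) (I : finType) (u v : I -> R) :
  (\sum_i u i * v i) ^+ 2 <= (\sum_i u i ^+ 2) * (\sum_i v i ^+ 2).
Proof.
rewrite mulrC; apply: quad_disc; first by apply: sumr_ge0 => i _; exact: sqr_ge0.
move=> t.
have -> : \sum_i v i ^+ 2 + 2 * (\sum_i u i * v i) * t + (\sum_i u i ^+ 2) * t ^+ 2
   = \sum_i (v i + t * u i) ^+ 2.
  rewrite mulr_sumr !mulr_suml -!big_split /=.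
  by apply: eq_bigr => i _; ring.
by apply: sumr_ge0 => i _; exact: sqr_ge0.
Qed.

Lemma le_sqrt_of_sq (R : rcfType) (x y : R) : x ^+ 2 <= y -> x <= Num.sqrt y.
Proof.
move=> h; case: (lerP x 0) => [x0|x0]; first by apply: le_trans x0 _; exact: sqrtr_ge0.
by rewrite -(ger0_norm (ltW x0)) -sqrtr_sqr ler_wsqrtr.
Qed.

Lemma rkhs_sum (R : realType) (Z : Type) (K : Z -> Z -> R) HK ip (I : Type) (r : seq I)
  (F : I -> Z -> R) : is_RKHS K HK ip -> (forall i, HK (F i)) ->
  HK (fun z => \sum_(i <- r) F i z) /\
  (forall h, HK h -> ip (fun z => \sum_(i <- r) F i z) h = \sum_(i <- r) ip (F i) h).
Proof.
move=> [H0 [Hadd [Hscal [Hsym [HipD [HipZ [Hpos [Hdef [Hcomp [HKz Hrep]]]]]]]]]] HF.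
elim: r => [|a r [IH1 IH2]].
  have -> : (fun z => \sum_(i <- [::]) F i z) = (fun _ => 0).
    by apply: funext => z; rewrite big_nil.
  split => // h hh; rewrite big_nil.
  have -> : (fun _ : Z => 0 : R) = (fun z => 0 * h z) by apply: funext => z; rewrite mul0r.
  by rewrite HipZ // mul0r.
have -> : (fun z => \sum_(i <- a :: r) F i z) = (fun z => F a z + \sum_(i <- r) F i z).
  by apply: funext => z; rewrite big_cons.
split; first exact: Hadd.
by move=> h hh; rewrite HipD // big_cons IH2.
Qed.

Lemma rkhs_cs (R : realType) (Z : Type) (K : Z -> Z -> R) HK ip f g :
  is_RKHS K HK ip -> HK f -> HK g -> (ip f g) ^+ 2 <= ip f f * ip g g.
Proof.
move=> hR; have [H0 [Hadd [Hscal [Hsym [HipD [HipZ [Hpos [Hdef [Hcomp [HKz Hrep]]]]]]]]]] := hR.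
move=> hf hg; apply: quad_disc; first exact: Hpos.
move=> t.
pose tg := fun z => t * g z.
have htg : HK tg by exact: Hscal.
have hs : HK (fun z => f z + tg z) by exact: Hadd.
have e1 : ip tg f = t * ip g f by exact: HipZ.
have e2 : ip tg g = t * ip g g by exact: HipZ.
have e3 : ip (fun z => f z + tg z) f = ip f f + ip tg f by exact: HipD.
have e4 : ip (fun z => f z + tg z) tg = ip f tg + ip tg tg by exact: HipD.
have e5 : ip (fun z => f z + tg z) (fun z => f z + tg z) =
   ip f (fun z => f z + tg z) + ip tg (fun z => f z + tg z) by exact: HipD.
have e6 : ip tg tg = t * ip g tg by exact: HipZ.
have := Hpos _ hs.
rewrite e5 (Hsym f) // (Hsym tg) // e3 e4 e1 e6 (Hsym g tg) // e2 (Hsym f tg) // e1.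
by rewrite (Hsym g f) //; congr (0 <= _); ring.
Qed.

Lemma K_sym (R : realType) (Z : Type) (K : Z -> Z -> R) HK ip a b :
  is_RKHS K HK ip -> K a b = K b a.
Proof.
move=> [H0 [Hadd [Hscal [Hsym [HipD [HipZ [Hpos [Hdef [Hcomp [HKz Hrep]]]]]]]]]].
by rewrite -Hrep // -[K b a]Hrep // Hsym.
Qed.

Lemma rkhs_comb (R : realType) (Z : Type) (K : Z -> Z -> R) HK ip n
  (zs : 'I_n -> Z) (c : 'I_n -> R) : is_RKHS K HK ip ->
  let g := fun z => \sum_(i < n) c i * K (zs i) z in
  HK g /\ (forall h, HK h -> ip g h = \sum_(i < n) c i * h (zs i)).
Proof.
move=> hR; have [H0 [Hadd [Hscal [Hsym [HipD [HipZ [Hpos [Hdef [Hcomp [HKz Hrep]]]]]]]]]] := hR.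
move=> g.
have [h1 h2] := @rkhs_sum R Z K HK ip _ (index_enum 'I_n) (fun i z => c i * K (zs i) z) hR
  (fun i => Hscal _ _ (HKz (zs i))).
split; first exact: h1.
move=> h hh; rewrite h2 //; apply: eq_bigr => i _.
by rewrite HipZ // Hsym // Hrep.
Qed.

Lemma rkhs_key (R : realType) (Z : Type) (K : Z -> Z -> R) HK ip n
  (zs : 'I_n -> Z) (c : 'I_n -> R) h : is_RKHS K HK ip -> HK h ->
  (\sum_(i < n) c i * h (zs i)) ^+ 2 <=
     ip h h * \sum_(i < n) \sum_(j < n) c i * c j * K (zs i) (zs j) /\
  0 <= \sum_(i < n) \sum_(j < n) c i * c j * K (zs i) (zs j).
Proof.
move=> hR hh; have [H0 [Hadd [Hscal [Hsym [HipD [HipZ [Hpos [Hdef [Hcomp [HKz Hrep]]]]]]]]]] := hR.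
have [hg hip] := @rkhs_comb _ _ _ _ _ _ zs c hR.
set g := (fun z => _) in hg hip.
have gg : ip g g = \sum_(i < n) \sum_(j < n) c i * c j * K (zs i) (zs j).
  rewrite hip //; apply: eq_bigr => i _; rewrite /g mulr_sumr; apply: eq_bigr => j _.
  by rewrite mulrA (@K_sym _ _ _ _ _ _ _ hR).
rewrite -gg; split; last exact: Hpos.
by rewrite -hip // mulrC (@rkhs_cs _ _ _ _ _ _ _ hR).
Qed.

Lemma rad_sum (R : realType) n (i j : 'I_n) :
  \sum_(s : {ffun 'I_n -> bool}) sgn R (s i) * sgn R (s j) = (i == j)%:R * 2 ^+ n.
Proof.
case: (eqVneq i j) => [->|nij].
  have -> : \sum_(s : {ffun 'I_n -> bool}) sgn R (s j) * sgn R (s j) = \sum_(s : {ffun 'I_n -> bool}) 1.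
    by apply: eq_bigr => s _; case: (s j); rewrite /sgn ?mulr1 ?mulrNN ?mulr1.
  by rewrite sumr_const card_ffun card_bool card_ord mul1r natrX.
pose fl (s : {ffun 'I_n -> bool}) := [ffun k => if k == i then ~~ s k else s k].
have flK : involutive fl.
  by move=> s; apply/ffunP => k; rewrite !ffunE; case: (k == i) => //; rewrite negbK.
set S := (X in X = _).
have : S = - S.
  rewrite {1}/S (reindex_inj (inv_inj flK)) -sumrN; apply: eq_bigr => s _.
  have nji : (j == i) = false by rewrite eq_sym (negPf nij).
  rewrite !ffunE eqxx nji.
  by case: (s i); case: (s j); rewrite /sgn /=; ring.
move=> h; have : S *+ 2 = 0 by rewrite mulr2n {1}h addNr.
move/eqP; rewrite -mulr_natl mulf_eq0 pnatr_eq0 /= => /eqP ->.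
by rewrite mul0r.
Qed.

Lemma rad_quad (R : realType) n (M : 'M[R]_n) :
  \sum_(s : {ffun 'I_n -> bool})
     ((\row_i sgn R (s i)) *m M *m (\row_i sgn R (s i))^T) 0 0 = 2 ^+ n * \tr M.
Proof.
transitivity (\sum_(s : {ffun 'I_n -> bool}) \sum_(j < n) \sum_(k < n)
    M k j * (sgn R (s k) * sgn R (s j))).
  apply: eq_bigr => s _; rewrite mxE; apply: eq_bigr => j _.
  rewrite !mxE mulr_suml; apply: eq_bigr => k _; rewrite !mxE; ring.
rewrite exchange_big /= /mxtrace mulr_sumr; apply: eq_bigr => j _.
rewrite exchange_big /= (bigD1 j) //= [X in _ + X]big1 ?addr0.
  by rewrite -mulr_sumr rad_sum eqxx mul1r mulrC.
by move=> k nkj; rewrite -mulr_sumr rad_sum (negPf nkj) mul0r mulr0.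
Qed.

Lemma psd_eig (R : realType) n (A : 'M[R]_n) (mu : 'I_n -> R) :
  (forall x : 'rV_n, 0 <= (x *m A *m x^T) 0 0) ->
  char_poly A = \prod_(j < n) ('X - (mu j)%:P) -> forall j, 0 <= mu j.
Proof.
move=> psd hchar j.
have : eigenvalue A (mu j).
  rewrite eigenvalue_root_char hchar.
  have -> : \prod_(j < n) ('X - (mu j)%:P) = \prod_(x <- [seq mu i | i <- index_enum 'I_n]) ('X - x%:P).
    by rewrite big_map.
  by rewrite root_prod_XsubC; apply: map_f; rewrite mem_index_enum.
case/eigenvalueP => v hv vn0.
have := psd v; rewrite hv -scalemxAl mxE.
have vpos : 0 < (v *m v^T) 0 0.
  rewrite mxE.
  case: (pickP (fun i => v 0 i != 0)) => [i hi | h]; last first.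
    exfalso; move/negP: vn0; apply; apply/eqP/rowP => k.
    by have /negbFE/eqP -> := h k; rewrite mxE.
  rewrite (bigD1 i) //= mxE; apply: ltr_wpDr.
    by apply: sumr_ge0 => k _; rewrite mxE -expr2 sqr_ge0.
  by rewrite -expr2 lt_def sqr_ge0 andbT sqrf_eq0 hi.
by rewrite pmulr_lge0.
Qed.

Lemma W_ident (R : realType) n (A : 'M[R]_n) (de ga : R) (ev : 'rV_n) :
  (de%:M + ga *: A) \in unitmx ->
  de * ((ev - de *: (ev *m invmx (de%:M + ga *: A))) *m
        (ev - de *: (ev *m invmx (de%:M + ga *: A)))^T) 0 0
  + ga * ((de *: (ev *m invmx (de%:M + ga *: A))) *m A *m
          (de *: (ev *m invmx (de%:M + ga *: A)))^T) 0 0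
  = de * (ev *m ev^T) 0 0 - de ^+ 2 * (ev *m invmx (de%:M + ga *: A) *m ev^T) 0 0.
Proof.
move=> Bu.
set B := de%:M + ga *: A.
set wv := ev *m invmx B.
have wB : wv *m B = ev by rewrite /wv -mulmxA mulVmx // mulmx1.
have hA : ga * (wv *m A *m wv^T) 0 0 = (ev *m wv^T) 0 0 - de * (wv *m wv^T) 0 0.
  rewrite -wB /B mulmxDr mul_mx_scalar -scalemxAr mulmxDl -!scalemxAl !mxE.
  ring.
rewrite -/wv.
rewrite !linearB /= !linearZ /= !mulmxDl -!scalemxAl !mulNmx !mxE.
rewrite !mxE in hA.
set X := \sum_j (wv *m A) 0 j * wv^T j 0 in hA *.
rewrite -[de ^+ 2 *: _]/(de ^+ 2 * _).
have -> : ga * (de * (de * X)) = de ^+ 2 * (ga * X) by ring.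
rewrite hA; ring.
Qed.

Lemma quad_entry (R : realType) n (x y : 'rV[R]_n) (M : 'M[R]_n) :
  (x *m M *m y^T) 0 0 = \sum_(i < n) \sum_(j < n) x 0 i * y 0 j * M i j.
Proof.
rewrite mxE exchange_big /=; apply: eq_bigr => j _.
rewrite mxE mulr_suml; apply: eq_bigr => i _; rewrite !mxE; ring.
Qed.

Theorem lemma10 (R : realType) (dZ : measure_display) (Z : measurableType dZ)
    (dX : measure_display) (X : measurableType dX)
    (rho : probability Z R) (K : Z -> Z -> R)
    (HK : set (Z -> R)) (ip : (Z -> R) -> (Z -> R) -> R)
    (mu : nat -> R) (phi : nat -> Z -> R)
    (fH : Z -> R) (ghat : X -> Z) :
  is_RKHS K HK ip ->
  assumption_A3 rho K mu phi ->
  HK fH ->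
  measurable_fun setT ghat ->
  forall (n : nat) (Xs : 'I_n -> X) (muhat : 'I_n -> R),
    (0 < n)%N ->
    char_poly (Kmat K ghat Xs) = \prod_(j < n) ('X - (muhat j)%:P) ->
    (forall i j : 'I_n, (i <= j)%N -> muhat j <= muhat i) ->
    forall delta : R, 0 < delta ->
      (local_rademacher HK ip fH ghat Xs delta <=
       (Num.sqrt 10%:R * Num.max (normK ip fH) 1 * Rhat muhat delta)%:E)%E.
Proof.
move=> hR _ hfH _ n Xs muhat n0 hchar _ de de0.
have [H0 [Hadd [Hscal [Hsym [HipD [HipZ [Hpos [Hdef [Hcomp [HKz Hrep]]]]]]]]]] := hR.
clear Hcomp Hdef.
pose zs := fun i => ghat (Xs i).
pose A := Kmat K ghat Xs.
have AE : forall i j, A i j = n%:R^-1 * K (zs i) (zs j) by move=> i j; rewrite mxE.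
have nR0 : 0 < (n%:R : R) by rewrite ltr0n.
have At : A^T = A.
  by apply/matrixP => i j; rewrite mxE !AE (@K_sym _ _ _ _ _ _ _ hR).
have psd : forall x : 'rV_n, 0 <= (x *m A *m x^T) 0 0.
  move=> x; rewrite quad_entry.
  have [_ h] := @rkhs_key _ _ _ _ _ n zs (fun i => x 0 i) fH hR hfH.
  have -> : \sum_(i < n) \sum_(j < n) x 0 i * x 0 j * A i j =
     n%:R^-1 * \sum_(i < n) \sum_(j < n) x 0 i * x 0 j * K (zs i) (zs j).
    rewrite mulr_sumr; apply: eq_bigr => i _; rewrite mulr_sumr; apply: eq_bigr => j _.
    by rewrite AE; ring.
  by rewrite mulr_ge0 // invr_ge0 ltW.
have mu0 := @psd_eig _ _ _ _ psd hchar.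
pose ga := ip fH fH.
have ga0 : 0 <= ga by exact: Hpos.
have [Bu trPsi] := @trace_inv _ _ _ _ _ _ At hchar mu0 de0 ga0.
set Psi := invmx (de%:M + ga *: A) in trPsi.
pose ev (s : {ffun 'I_n -> bool}) : 'rV[R]_n := \row_i sgn R (s i).
pose wv s := ev s *m Psi.
pose pp s i := (ev s - de *: wv s) 0 i.
pose rr s i := (de *: wv s) 0 i.
pose Sr s := \sum_(i < n) \sum_(j < n) rr s i * rr s j * K (zs i) (zs j).
pose W s := n%:R * de * (\sum_(i < n) pp s i ^+ 2) + ga * Sr s.
pose b s := n%:R^-1 * Num.sqrt (10 * W s).
rewrite /local_rademacher.
apply: (@le_trans _ _ ((2%:R ^- n)%:E * \sum_(s : {ffun 'I_n -> bool}) (b s)%:E)%E).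
  apply: lee_wpmul2l; first by rewrite lee_fin invr_ge0 exprn_ge0.
  apply: lee_sum => s _; apply: ge_ereal_sup => _ [f hf <-]; rewrite lee_fin.
  case: hf => [[hKf hnorm] hEn].
  pose h := fun z => f z - fH z.
  have hh : HK h.
    have -> : h = (fun z => f z + (fun z => -1 * fH z) z).
      by apply: funext => z; rewrite /h mulN1r.
    by apply: Hadd => //; apply: Hscal.
  have hhh : ip h h <= 9 * ga.
    move: hnorm; rewrite /normK -/h -/ga => hn.
    have a0 := sqrtr_ge0 (ip h h).
    have g0 := sqrtr_ge0 ga.
    have e1 := sqr_sqrtr (Hpos _ hh).
    have e2 := sqr_sqrtr ga0.
    rewrite -e1 -e2; nra.
  have hv : \sum_(i < n) h (zs i) ^+ 2 <= n%:R * de.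
    by move: hEn; rewrite /En ler_pdivrMl.
  have esplit : forall i, sgn R (s i) = pp s i + rr s i.
    by move=> i; rewrite /pp /rr !mxE; ring.
  have -> : \sum_(i < n) sgn R (s i) * (f (ghat (Xs i)) - fH (ghat (Xs i))) =
      \sum_(i < n) pp s i * h (zs i) + \sum_(i < n) rr s i * h (zs i).
    by rewrite -big_split; apply: eq_bigr => i _; rewrite esplit mulrDl.
  set a := \sum_(i < n) pp s i * h (zs i).
  set bb := \sum_(i < n) rr s i * h (zs i).
  have P0 : 0 <= \sum_(i < n) pp s i ^+ 2 by apply: sumr_ge0 => i _; exact: sqr_ge0.
  have ha : a ^+ 2 <= (\sum_(i < n) pp s i ^+ 2) * (n%:R * de).
    apply: le_trans (@cs_sum _ _ (pp s) (fun i => h (zs i))) _; exact: ler_wpM2l.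
  have [hb1 hb2] := @rkhs_key _ _ _ _ _ n zs (rr s) h hR hh.
  have hb : bb ^+ 2 <= 9 * ga * Sr s.
    apply: le_trans hb1 _; exact: ler_wpM2r.
  rewrite /b; apply: ler_wpM2l; first by rewrite invr_ge0 ltW.
  apply: le_sqrt_of_sq; rewrite /W.
  have : 0 <= (3 * a - bb / 3) ^+ 2 by exact: sqr_ge0.
  nra.
rewrite sumEFin -EFinM lee_fin.
have Sr0 : forall s, 0 <= Sr s.
  by move=> s; have [_ h] := @rkhs_key _ _ _ _ _ n zs (rr s) fH hR hfH.
have W0 : forall s, 0 <= W s.
  move=> s; apply: addr_ge0; last exact: mulr_ge0.
  apply: mulr_ge0; first by apply: mulr_ge0 => //; exact: ltW.
  by apply: sumr_ge0 => i _; exact: sqr_ge0.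
have Wform : forall s, W s = n%:R * (de * (ev s *m (ev s)^T) 0 0
     - de ^+ 2 * (ev s *m Psi *m (ev s)^T) 0 0).
  move=> s; rewrite -(@W_ident _ _ A de ga (ev s) Bu) -/Psi -/(wv s).
  have e1 : \sum_(i < n) pp s i ^+ 2 = ((ev s - de *: wv s) *m (ev s - de *: wv s)^T) 0 0.
    by rewrite [RHS]mxE; apply: eq_bigr => i _; rewrite /pp !mxE expr2.
  have e2 : Sr s = n%:R * ((de *: wv s) *m A *m (de *: wv s)^T) 0 0.
    rewrite quad_entry mulr_sumr; apply: eq_bigr => i _; rewrite mulr_sumr.
    apply: eq_bigr => j _; rewrite AE.
    have nn0 : (n%:R : R) != 0 by rewrite gt_eqF.
    by rewrite /rr; field.
  by rewrite /W e1 e2; ring.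
pose D := de * n%:R - de ^+ 2 * \tr Psi.
have sumW : \sum_(s : {ffun 'I_n -> bool}) W s = n%:R * 2 ^+ n * D.
  under eq_bigr do rewrite Wform.
  rewrite -mulr_sumr sumrB -!mulr_sumr.
  have -> : \sum_(s : {ffun 'I_n -> bool}) (ev s *m (ev s)^T) 0 0
          = \sum_(s : {ffun 'I_n -> bool}) (ev s *m 1%:M *m (ev s)^T) 0 0.
    by apply: eq_bigr => s _; rewrite mulmx1.
  rewrite !rad_quad mxtrace1 /D; ring.
pose N := normK ip fH.
pose Mx := Num.max N 1.
have N0 : 0 <= N by exact: sqrtr_ge0.
have NMx : N <= Mx by rewrite le_max lexx.
have Mx1 : 1 <= Mx by rewrite le_max lexx orbT.
have gaN : ga = N ^+ 2 by rewrite /N /normK sqr_sqrtr.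
have gaMx : ga <= Mx ^+ 2 by rewrite gaN; nra.
have Mx21 : 1 <= Mx ^+ 2 by nra.
pose Smin := \sum_(j < n) Num.min de (muhat j).
have Dle : D <= Mx ^+ 2 * Smin.
  rewrite /D trPsi mulr_sumr.
  have -> : de * n%:R = \sum_(j < n) de by rewrite sumr_const card_ord mulr_natr.
  rewrite mulr_sumr -sumrB; apply: ler_sum => j _.
  have mj := mu0 j.
  have t0 : 0 < de + ga * muhat j by rewrite ltr_pwDl // mulr_ge0.
  have -> : de - de ^+ 2 * (de + ga * muhat j)^-1 = de * ga * muhat j / (de + ga * muhat j).
    by field; rewrite gt_eqF.
  rewrite ler_pdivrMr //.
  have p0 : 0 <= de * ga * muhat j by rewrite mulr_ge0 // mulr_ge0 // ltW.
  have q0 : 0 <= (Mx ^+ 2 - 1) * (de * ga * muhat j) by rewrite mulr_ge0 // subr_ge0.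
  have [hle|hlt] := leP de (muhat j).
    have r0 : 0 <= Mx ^+ 2 * de * de by apply: mulr_ge0; [apply: mulr_ge0; [exact: sqr_ge0|exact: ltW]|exact: ltW].
    nra.
  have r1 : 0 <= (Mx ^+ 2 - ga) * de * muhat j by apply: mulr_ge0 => //; apply: mulr_ge0; [rewrite subr_ge0|exact: ltW].
  have r2 : 0 <= Mx ^+ 2 * ga * muhat j * muhat j by apply: mulr_ge0 => //; apply: mulr_ge0 => //; apply: mulr_ge0 => //; exact: sqr_ge0.
  nra.
rewrite -/N -/Mx /Rhat -/Smin.
have hb : \sum_(s : {ffun 'I_n -> bool}) b s =
    n%:R^-1 * \sum_(s : {ffun 'I_n -> bool}) Num.sqrt (10 * W s) by rewrite mulr_sumr.
have hJ : \sum_(s : {ffun 'I_n -> bool}) Num.sqrt (10 * W s)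
    <= Num.sqrt (2 ^+ n * (10 * (n%:R * 2 ^+ n * D))).
  apply: le_sqrt_of_sq.
  have := @cs_sum _ _ (fun _ => 1) (fun s => Num.sqrt (10 * W s)).
  have e1 : \sum_(s : {ffun 'I_n -> bool}) (fun _ => (1 : R)) s * Num.sqrt (10 * W s)
     = \sum_(s : {ffun 'I_n -> bool}) Num.sqrt (10 * W s).
    by apply: eq_bigr => s _; rewrite mul1r.
  have e2 : \sum_(s : {ffun 'I_n -> bool}) (fun _ => (1 : R)) s ^+ 2 = 2 ^+ n.
    by rewrite sumr_const card_ffun card_bool card_ord expr1n natrX.
  have e3 : \sum_(s : {ffun 'I_n -> bool}) (Num.sqrt (10 * W s)) ^+ 2
     = 10 * (n%:R * 2 ^+ n * D).
    rewrite -sumW mulr_sumr; apply: eq_bigr => s _; rewrite sqr_sqrtr //.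
    by apply: mulr_ge0 => //; exact: W0.
  by rewrite e1 e2 e3.
have n0' : (n%:R : R) != 0 by rewrite gt_eqF.
have p2 : (2 ^+ n : R) != 0 by rewrite expf_neq0 // pnatr_eq0.
rewrite hb mulrA.
have c0 : 0 < 2 ^- n * (n%:R : R)^-1.
  by rewrite mulr_gt0 // invr_gt0 // exprn_gt0 // ltr0n.
apply: le_trans (ler_wpM2l (ltW c0) hJ) _.
have Mx0 : 0 <= Mx by apply: le_trans Mx1; exact: ler01.
have key : forall c x : R, 0 <= c -> c * Num.sqrt x = Num.sqrt (c ^+ 2 * x).
  by move=> c x c0'; rewrite sqrtrM ?sqr_ge0 // sqrtr_sqr ger0_norm.
have h10 : (0 : R) <= 10%:R by rewrite ler0n.
rewrite (key _ _ (ltW c0)).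
apply: (@le_trans _ _ (Num.sqrt (Mx ^+ 2 * (10%:R * (n%:R^-1 * Smin))))); last first.
  rewrite sqrtrM ?sqr_ge0 // sqrtr_sqr ger0_norm // sqrtrM // mulrA (mulrC Mx).
  exact: lexx.
apply: ler_wsqrtr.
have -> : (2 ^- n * n%:R^-1) ^+ 2 * (2 ^+ n * (10 * (n%:R * 2 ^+ n * D)))
    = 10 * n%:R^-1 * D.
  by field; rewrite n0' p2.
have -> : Mx ^+ 2 * (10 * (n%:R^-1 * Smin)) = 10 * n%:R^-1 * (Mx ^+ 2 * Smin) by ring.
apply: ler_wpM2l Dle.
by rewrite mulr_ge0 // invr_ge0 ltW.
Qed.
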